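(* Let $M$ be a fixed positive integer and let $A\in[0,1]$ be a random variable. Suppose there is a constant $\delta\ge0$ such that $\mathbb P(A\le\alpha)\le\alpha+\delta$ for every $\alpha\in(0,1)$. Let $B$ be a random variable such that, conditional on $A$, $B\sim\mathrm{Binom}(M,A)$, and let $R=\frac{1+B}{1+M}$. Then $\mathbb P(R\le\alpha)\le\alpha+\delta$ for every $\alpha\in(0,1)$. *)

(* Defs.v *)
From HB Require Import structures.
From mathcomp Require Import all_boot all_order all_algebra.
From mathcomp Require Import all_classical all_reals all_analysis.
Set Implicit Arguments. Unset Strict Implicit. Unset Printing Implicit Defensive.
Import Order.TTheory GRing.Theory Num.Theory.
Local Open Scope classical_set_scope.
Local Open Scope ring_scope.

Definition binom_pmf (R : realType) (M : nat) (a : R) (k : nat) : R :=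
  ('C(M, k))%:R * a ^+ k * (1 - a) ^+ (M - k).

(* "Conditional on A, B ~ Binom(M, A)": for every Borel set S and every k,
   P(A in S, B = k) = E[ 1_{A in S} * binom_pmf M A k ]. *)
Definition cond_binomial d (T : measurableType d) (R : realType)
  (P : probability T R) (M : nat) (A : T -> R) (B : T -> nat) : Prop :=
  forall (S : set R) (k : nat), measurable S ->
    P (A @^-1` S `&` [set t | B t = k]) =
    (\int[P]_(t in A @^-1` S) (binom_pmf M (A t) k)%:E)%E.

(* Main.v *)
Require Import Defs.
From HB Require Import structures.
From mathcomp Require Import all_boot all_order all_algebra.
From mathcomp Require Import all_classical all_reals all_analysis.
From mathcomp Require Import measurable_realfun.
From mathcomp Require Import ring lra polyrcf.
Import Order.TTheory GRing.Theory Num.Theory.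
Local Open Scope classical_set_scope.
Local Open Scope ring_scope.

Section P.
Context {R : realType}.
Definition bp (n k : nat) : {poly R} := ('C(n, k))%:R *: ('X^k * (1 - 'X) ^+ (n - k)).
Definition Fp (n m : nat) : {poly R} := \sum_(k < m) bp n k.

Lemma bp_deriv n k : (k <= n)%N ->
  (bp n.+1 k.+1)^`() = n.+1%:R *: (bp n k - bp n k.+1).
Proof.
move=> kn; rewrite /bp derivZ derivM derivXn deriv_exp derivB derivC derivX sub0r.
rewrite subSS.
have h1 : ('C(n.+1, k.+1) * k.+1 = n.+1 * 'C(n, k))%N by rewrite (mul_bin_diag n.+1 k) mulnC.
have h2 : ('C(n.+1, k.+1) * (n - k) = n.+1 * 'C(n, k.+1))%N.
  by rewrite (mul_bin_down n.+1 k.+1) subSS mulnC.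
have h1' : ('C(n.+1, k.+1)%:R * k.+1%:R = n.+1%:R * 'C(n, k)%:R :> {poly R}) by rewrite -!natrM h1.
have h2' : ('C(n.+1, k.+1)%:R * (n-k)%:R = n.+1%:R * 'C(n, k.+1)%:R :> {poly R}) by rewrite -!natrM h2.
rewrite subnS -!mul_polyC !polyC_natr.
set U := (1 - 'X) ^+ (n - k).-1.
rewrite /=.
transitivity (('C(n.+1, k.+1)%:R * k.+1%:R) * (('X : {poly R}) ^+ k * (1 - 'X) ^+ (n - k)) - ('C(n.+1, k.+1)%:R * (n - k)%:R) * (('X : {poly R}) ^+ k.+1 * U)); first by ring.
by rewrite h1' h2'; ring.
Qed.

Lemma Fp_deriv n j : (j <= n)%N -> (Fp n.+1 j.+1)^`() = - (n.+1%:R *: bp n j).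
Proof.
elim: j => [|j IH] jn.
  rewrite /Fp big_ord1 /bp derivZ derivM derivXn deriv_exp derivB derivC derivX sub0r.
  rewrite !bin0 !subn0 /= -!mul_polyC !polyC_natr; ring.
rewrite /Fp big_ord_recr /= derivD -/(Fp n.+1 j.+1) IH ?(ltnW jn)// bp_deriv ?(ltnW jn)//.
by rewrite scalerBr addKr.
Qed.

Lemma X_bp n j : 'X * (n.+1%:R *: bp n j) = j.+1%:R *: bp n.+1 j.+1.
Proof.
rewrite /bp subSS -!mul_polyC !polyC_natr.
have h : (n.+1 * 'C(n, j) = j.+1 * 'C(n.+1, j.+1))%N by rewrite (mul_bin_diag n.+1 j).
have h' : (n.+1%:R * 'C(n, j)%:R = j.+1%:R * 'C(n.+1, j.+1)%:R :> {poly R}) by rewrite -!natrM h.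
rewrite exprS.
transitivity ((n.+1%:R * 'C(n, j)%:R) * ('X * ('X ^+ j * (1 - 'X) ^+ (n - j))) : {poly R}); first by ring.
by rewrite h'; ring.
Qed.

Lemma bpE n k a : (bp n k).[a] = binom_pmf n a k.
Proof. by rewrite /bp /binom_pmf !hornerE. Qed.

Lemma FpE n m a : (Fp n m).[a] = \sum_(k < m) binom_pmf n a k.
Proof. by rewrite /Fp horner_sum; apply: eq_bigr => k _; rewrite bpE. Qed.

Lemma binom_pmf_ge0 n (a : R) k : 0 <= a <= 1 -> 0 <= binom_pmf n a k.
Proof.
case/andP=> a0 a1; rewrite /binom_pmf !mulr_ge0 ?exprn_ge0 ?subr_ge0 //.
Qed.

Lemma Fp0 n j : (Fp n j.+1).[0] = 1.
Proof.
rewrite FpE big_ord_recl /= big1 ?addr0.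
  by rewrite /binom_pmf bin0 !expr0 subr0 expr1n !mulr1.
by move=> i _; rewrite /binom_pmf expr0n /= mulr0 mul0r.
Qed.

Lemma Fp1 n m : (m <= n)%N -> (Fp n m).[1] = 0.
Proof.
move=> mn; rewrite FpE big1 // => i _.
by rewrite /binom_pmf subrr expr0n subn_eq0 leqNgt (leq_trans (ltn_ord i) mn) mulr0.
Qed.


Lemma F_noninc n j (u v : R) : (j <= n)%N -> 0 <= u -> u <= v -> v <= 1 ->
  (Fp n.+1 j.+1).[v] <= (Fp n.+1 j.+1).[u].
Proof.
move=> jn u0 uv v1.
rewrite -lerN2 -!hornerN.
apply: (@ler_hornerW _ 0 1) => //; last by rewrite in_itv /= v1 (le_trans u0 uv).
  move=> x; rewrite in_itv /= => /andP[x0 x1].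
  rewrite derivN Fp_deriv // opprK hornerZ bpE mulr_ge0 ?binom_pmf_ge0 ?ltW ?x0 ?x1 //.
by rewrite in_itv /= u0 (le_trans uv v1).
Qed.

Definition Phi n j : {poly R} := (j.+1%:R / n.+2%:R) *: (1 - Fp n.+2 j.+2).

Lemma Phi_deriv n j : (j <= n)%N -> (Phi n j)^`() = 'X * (n.+1%:R *: bp n j).
Proof.
move=> jn; rewrite X_bp /Phi derivZ derivB derivC sub0r Fp_deriv // opprK scalerA.
by rewrite mulfVK // pnatr_eq0.
Qed.

Lemma step_ineq n j (u v : R) : (j <= n)%N -> 0 <= u -> u <= v -> v <= 1 ->
  ((Fp n.+1 j.+1).[u] - (Fp n.+1 j.+1).[v]) * u <= (Phi n j).[v] - (Phi n j).[u].
Proof.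
move=> jn u0 uv v1.
have : (Phi n j + u *: Fp n.+1 j.+1).[u] <= (Phi n j + u *: Fp n.+1 j.+1).[v].
  apply: (@ler_hornerW _ u v) => //; last 2 first.
  - by rewrite in_itv /= lexx uv.
  - by rewrite in_itv /= lexx uv.
  move=> x; rewrite in_itv /= => /andP[ux xv].
  rewrite derivD Phi_deriv // derivZ Fp_deriv //.
  set q := n.+1%:R *: bp n j.
  have -> : 'X * q + u *: - q = ('X - u%:P) * q by rewrite mulrBl scalerN mul_polyC.
  have x0 : 0 <= x by rewrite (le_trans u0) ?ltW.
  have x1 : x <= 1 by rewrite (le_trans _ v1) ?ltW.
  rewrite hornerM hornerXsubC mulr_ge0 ?subr_ge0 ?(ltW ux) // /q hornerZ bpE.
  by rewrite mulr_ge0 ?binom_pmf_ge0 ?x0.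
rewrite !hornerD !hornerZ.
set a := (Fp n.+1 j.+1).[u]; set b := (Fp n.+1 j.+1).[v].
set p := (Phi n j).[u]; set q := (Phi n j).[v].
rewrite mulrBl [a * u]mulrC [b * u]mulrC.
move: (u * a) (u * b) (j.+1%:R / n.+2%:R * (1 - Fp n.+2 j.+2).[u]) (j.+1%:R / n.+2%:R * (1 - Fp n.+2 j.+2).[v]) => x y z w; lra.
Qed.

Lemma tele (u : nat -> R) N : \sum_(i < N) (u i.+1 - u i) = u N - u 0%N.
Proof.
elim: N => [|N IH]; first by rewrite big_ord0 subrr.
by rewrite big_ord_recr /= IH; ring.
Qed.

Lemma sum_bound n j N (delta : R) : (j <= n)%N -> (0 < N)%N -> 0 <= delta ->
  \sum_(i < N) (((Fp n.+1 j.+1).[i%:R / N%:R] - (Fp n.+1 j.+1).[i.+1%:R / N%:R])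
                 * (i.+1%:R / N%:R + delta))
  <= j.+1%:R / n.+2%:R + N%:R^-1 + delta.
Proof.
move=> jn N0 d0.
pose F := fun a => (Fp n.+1 j.+1).[a].
pose x := fun i : nat => i%:R / N%:R : R.
change (\sum_(i < N) (F (x i) - F (x i.+1)) * (x i.+1 + delta) <= j.+1%:R / n.+2%:R + N%:R^-1 + delta).
have Npos : 0 < N%:R :> R by rewrite ltr0n.
have xN : x N = 1 by rewrite /x divff // gt_eqF.
have x0 : x 0%N = 0 by rewrite /x mul0r.
have xS : forall i, x i.+1 = x i + N%:R^-1 by move=> i; rewrite /x -addn1 natrD mulrDl mul1r.
have xin : forall i, (i <= N)%N -> 0 <= x i <= 1.
  move=> i iN; rewrite /x divr_ge0 ?ler0n ?(ltW Npos) //= ler_pdivrMr // mul1r ler_nat //.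
have sc : \sum_(i < N) (F (x i) - F (x i.+1)) = 1.
  have := tele (fun i => - F (x i)) N; rewrite /= xN x0.
  rewrite /F Fp1 // Fp0 oppr0 sub0r opprK => <-.
  by apply: eq_bigr => i _; rewrite opprK addrC.
have sx : \sum_(i < N) (F (x i) - F (x i.+1)) * x i <= j.+1%:R / n.+2%:R.
  apply: (le_trans (y := \sum_(i < N) ((Phi n j).[x i.+1] - (Phi n j).[x i]))).
    apply: ler_sum => i _.
    have /andP[a0 a1] := xin i (ltnW (ltn_ord i)).
    have /andP[b0 b1] := xin i.+1 (ltn_ord i).
    apply: step_ineq => //.
    by rewrite xS lerDl invr_ge0 ltW.
  rewrite (tele (fun i => (Phi n j).[x i])) /= xN x0 /Phi !hornerE.

  by rewrite Fp1 ?ltnS // Fp0 subr0 subrr mulr0 subr0 mulr1.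
have -> : \sum_(i < N) (F (x i) - F (x i.+1)) * (x i.+1 + delta) =
  \sum_(i < N) (F (x i) - F (x i.+1)) * x i + (\sum_(i < N) (F (x i) - F (x i.+1))) * (N%:R^-1 + delta).
  by rewrite mulr_suml -big_split; apply: eq_bigr => i _ /=; rewrite xS; ring.
by rewrite sc mul1r addrA !lerD2r.
Qed.

Lemma ptwise (F : R -> R) (x : nat -> R) (a : R) k :
  (forall u v, 0 <= u -> u <= v -> v <= 1 -> F v <= F u) ->
  (forall i, (i <= k)%N -> 0 <= x i <= 1) ->
  (forall i, (i < k)%N -> x i <= x i.+1) ->
  x 0%N <= a -> a <= 1 ->
  F a - F (x k) <= \sum_(i < k) (F (x i) - F (x i.+1)) * (a < x i.+1)%R%:R.
Proof.
move=> hF hx hxi xa a1.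
have a0 : 0 <= a by case/andP: (hx 0%N isT) => h _; apply: le_trans xa.
elim: k hx hxi => [|k IH] hx hxi.
  rewrite big_ord0 subr_le0; case/andP: (hx 0%N isT) => h0 _; exact: hF.
have ci : forall i, (i < k.+1)%N -> 0 <= F (x i) - F (x i.+1).
  move=> i ik; rewrite subr_ge0; case/andP: (hx i (ltnW ik)) => ? _.
  by case/andP: (hx i.+1 ik) => _ ?; apply: hF => //; apply: hxi.
rewrite big_ord_recr /=.
case: (ltP a (x k.+1)) => h /=.
  rewrite mulr1.
  have := IH (fun i ik => hx i (leqW ik)) (fun i ik => hxi i (ltnW ik)).
  move=> H; apply: le_trans (lerD H (lexx _)) ; rewrite addrA subrK lexx //.
rewrite mulr0 addr0.
apply: (@le_trans _ _ 0).
  rewrite subr_le0; apply: hF => //; by case/andP: (hx k.+1 (leqnn _)).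
apply: sumr_ge0 => i _; apply: mulr_ge0; first exact: ci (ltnW (ltn_ord i)).
by rewrite ler0n.
Qed.
End P.

Theorem lemmaA1 (d : measure_display) (T : measurableType d) (R : realType)
  (P : probability T R) (M : nat) (A : T -> R) (B : T -> nat) (delta : R) :
  (0 < M)%N ->
  measurable_fun setT A ->
  (forall k : nat, measurable [set t | B t = k]) ->
  (forall t, 0 <= A t <= 1) ->
  0 <= delta ->
  (forall alpha : R, 0 < alpha < 1 ->
     (P [set t | (A t <= alpha)%R] <= (alpha + delta)%:E)%E) ->
  cond_binomial P M A B ->
  forall alpha : R, 0 < alpha < 1 ->
    (P [set t | ((1 + B t)%:R / (1 + M)%:R <= alpha)%R] <= (alpha + delta)%:E)%E.
Proof.
move=> M0 mA mB Ain d0 hA cB alpha /andP[al0 al1].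
have M1 : 0 < (1 + M)%:R :> R by rewrite ltr0n.
have [m [key [mM mle]]] : exists m : nat,
   (forall t, ((1 + B t)%:R / (1 + M)%:R <= alpha) = (B t < m)%N) /\
   (m <= M)%N /\ m%:R <= alpha * (1 + M)%:R.
  have x0 : 0 <= alpha * (1 + M)%:R by rewrite mulr_ge0 ?ltW.
  exists (Num.trunc (alpha * (1 + M)%:R)); split; last split.
  - by move=> t; rewrite ler_pdivrMr // -truncn_ge_nat // add1n.
  - by rewrite truncn_le_nat -add1n mulrC gtr_pMr ?ltr0n.
  - by rewrite -truncn_ge_nat.
rewrite (_ : [set t | _] = [set t | (B t < m)%N]); last first.
  by apply/seteqP; split => t /=; rewrite key.
have mBlt : forall k, measurable [set t | (B t < k)%N].
  elim => [|k IH].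
    by rewrite (_ : [set t | _] = set0) //; apply/seteqP; split => t //=.
  rewrite (_ : [set t | _] = [set t | (B t < k)%N] `|` [set t | B t = k]).
    exact: measurableU.
  have e : forall t, (B t < k.+1)%N = (B t < k)%N || (B t == k).
    by move=> t; rewrite ltnS leq_eqVlt orbC.
  apply/seteqP; split => t /=; rewrite e.
    by case/orP => [->|/eqP->]; [left|right].
  by case => [->|->]; rewrite ?eqxx ?orbT.
have PBlt : forall k, P [set t | (B t < k)%N] = (\sum_(i < k) P [set t | B t = i])%E.
  elim => [|k IH].
    by rewrite big_ord0 (_ : [set t | _] = set0) ?measure0 //; apply/seteqP; split => t //=.
  rewrite big_ord_recr /= -IH.
  rewrite (_ : [set t | _] = [set t | (B t < k)%N] `|` [set t | B t = k]).
    rewrite measureU //.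
    by apply/seteqP; split => t //= [] /[swap] -> ; rewrite ltnn.
  have e : forall t, (B t < k.+1)%N = (B t < k)%N || (B t == k).
    by move=> t; rewrite ltnS leq_eqVlt orbC.
  apply/seteqP; split => t /=; rewrite e.
    by case/orP => [->|/eqP->]; [left|right].
  by case => [->|->]; rewrite ?eqxx ?orbT.
have PBk : forall k, P [set t | B t = k] = (\int[P]_t (binom_pmf M (A t) k)%:E)%E.
  by move=> k; have := cB setT k measurableT; rewrite preimage_setT setTI.
have mhor : forall p : {poly R}, measurable_fun setT (fun t => (p.[A t])%:E).
  move=> p; apply/measurable_EFinP.
  exact: (measurableT_comp (continuous_measurable_fun (@continuous_horner _ p)) mA).
case: m key mM mle => [|j] key mM mle.
  rewrite (_ : [set t | _] = set0); last by apply/seteqP; split => t.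
  by rewrite measure0 lee_fin addr_ge0 // ltW.
clear key.
case: M M0 M1 cB PBk mM mle => [//|n] _ M1 cB PBk jn mle.
have PE : P [set t | (B t < j.+1)%N] = (\int[P]_t ((Fp n.+1 j.+1).[A t])%:E)%E.
  rewrite PBlt; under eq_bigr do rewrite PBk.
  rewrite -ge0_integral_sum //.
  - by apply: eq_integral => t _; rewrite sumEFin FpE.
  - by move=> k; under eq_fun do rewrite -bpE; exact: mhor.
  - by move=> k t _; rewrite lee_fin binom_pmf_ge0.
have mAlt : forall b : R, measurable [set t | A t < b].
  move=> b; have := mA measurableT _ (measurable_itv `]-oo, b[); rewrite setTI.
  congr measurable; apply/seteqP; split => t /=; rewrite in_itv //=.
have mAle : forall b : R, measurable [set t | A t <= b].
  move=> b; have := mA measurableT _ (measurable_itv `]-oo, b]); rewrite setTI.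
  congr measurable; apply/seteqP; split => t /=; rewrite in_itv //=.
have bound : forall N, (0 < N)%N ->
    (\int[P]_t ((Fp n.+1 j.+1).[A t])%:E <= (j.+1%:R / n.+2%:R + N%:R^-1 + delta)%:E)%E.
  move=> N N0.
  pose F := fun a : R => (Fp n.+1 j.+1).[a].
  pose x := fun i : nat => i%:R / N%:R : R.
  pose S := fun i : nat => [set t | A t < x i.+1].
  have Npos : 0 < N%:R :> R by rewrite ltr0n.
  have xN : x N = 1 by rewrite /x divff // gt_eqF.
  have xin : forall i, (i <= N)%N -> 0 <= x i <= 1.
    move=> i iN; rewrite /x divr_ge0 ?ler0n ?(ltW Npos) //= ler_pdivrMr // mul1r ler_nat //.
  have xle : forall i, x i <= x i.+1.
    by move=> i; rewrite /x ler_pM2r ?invr_gt0 // ler_nat.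
  have ci : forall i, (i < N)%N -> 0 <= F (x i) - F (x i.+1).
    move=> i iN; rewrite subr_ge0; case/andP: (xin i (ltnW iN)) => ? _.
    by case/andP: (xin i.+1 iN) => _ ?; apply: F_noninc.
  have ind : forall i t, \1_(S i) t = (A t < x i.+1)%R%:R :> R.
    by move=> i t; rewrite indicE; case: (boolP (A t < x i.+1)) => h; [rewrite mem_set | rewrite memNset //; apply/negP].
  apply: (@le_trans _ _ (\int[P]_t (\sum_(i < N) ((F (x i) - F (x i.+1)) * \1_(S i) t))%:E)%E).
    apply: ge0_le_integral => //.
    - by move=> t _; rewrite lee_fin FpE sumr_ge0 // => k _; exact: binom_pmf_ge0.
    - apply/measurable_EFinP; apply: measurable_sum => i.
      apply: (@measurable_funM _ _ _ _ (cst (F (x i) - F (x i.+1))) (\1_(S i))); [exact: measurable_cst | exact: measurable_indic (mAlt _)].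
    - move=> t _; rewrite lee_fin.
      under eq_bigr do rewrite ind.
      have := @ptwise _ F x (A t) N _ xin (fun i _ => xle i) _ _.
      rewrite xN /F Fp1 // subr0; apply.
      + by move=> u v u0 uv v1; apply: F_noninc.
      + by rewrite /x mul0r; case/andP: (Ain t).
      + by case/andP: (Ain t).
  under eq_integral do rewrite -sumEFin.
  rewrite ge0_integral_sum //; first last.
  - by move=> i t _; rewrite lee_fin mulr_ge0 ?ci // indicE ler0n.
  - move=> i; apply/measurable_EFinP.
    apply: (@measurable_funM _ _ _ _ (cst (F (x i) - F (x i.+1))) (\1_(S i))); [exact: measurable_cst | exact: measurable_indic (mAlt _)].
  apply: (@le_trans _ _ (\sum_(i < N) ((F (x i) - F (x i.+1)) * (x i.+1 + delta))%:E)%E); last first.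
    by rewrite sumEFin lee_fin; apply: sum_bound.
  apply: lee_sum => i _.
  under eq_integral do rewrite EFinM.
  rewrite ge0_integralZl_EFin //; try (by rewrite ci);
    try (by move=> t _; rewrite lee_fin indicE ler0n);
    try (by apply/measurable_EFinP; exact: measurable_indic (mAlt _)).
  rewrite integral_indic //; last exact: mAlt.
  rewrite (setIT (S i)) EFinM.
  apply: lee_wpmul2l; first by rewrite lee_fin ci.
  case: (ltnP i.+1 N) => iN.
    have xi : 0 < x i.+1 < 1.
      by rewrite /x divr_gt0 ?ltr0n //= ltr_pdivrMr // mul1r ltr_nat.
    apply: le_trans (hA _ xi).
    apply: le_measure; rewrite ?inE //; first exact: mAlt.
    by move=> t /= /ltW.
  have -> : x i.+1 = 1 by rewrite -xN; congr x; apply/eqP; rewrite eqn_leq iN ltn_ord.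
  apply: le_trans (probability_le1 _ (mAlt _)) _.
  by rewrite lee_fin lerDl.
have Pge0 : (0 <= P [set t | (B t < j.+1)%N])%E by [].
have Ple1 : (P [set t | (B t < j.+1)%N] <= 1)%E by apply: probability_le1.
have fin : P [set t | (B t < j.+1)%N] \is a fin_num.
  by rewrite ge0_fin_numE // (le_lt_trans Ple1) ?ltey.
rewrite -(fineK fin) lee_fin.
apply/ler_addgt0Pr => e e0.
pose N := (Num.trunc e^-1).+1.
have := bound N isT; rewrite -PE -(fineK fin) lee_fin => h.
apply: le_trans h _.
have eN : e^-1 < N%:R by rewrite -truncn_le_nat.
have Ne : N%:R^-1 < e by rewrite -[e]invrK ltf_pV2 ?posrE ?invr_gt0 ?ltr0n.
have ca : j.+1%:R / n.+2%:R <= alpha by rewrite ler_pdivrMr ?ltr0n // -[n.+2]add1n.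
move: (j.+1%:R / n.+2%:R) (N%:R^-1) ca Ne => u v; lra.
Qed.
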